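(* Let $\mathcal H=\mathcal H_A\otimes\mathcal H_B$ with $\mathcal H_A,\mathcal H_B$ finite-dimensional complex Hilbert spaces, and let $S=\{|\alpha_i\rangle\otimes|\beta_i\rangle\}_{i=1}^{|S|}$ be a partial product basis in $\mathcal H$. Suppose $S$ is uncompletable in $\mathcal H$, but $S$ is completable in some local extension $\mathcal H'$ of $\mathcal H$. Define $$\rho_S=\frac{1}{\dim\mathcal H-|S|}\Big(\mathbf 1-\sum_{i=1}^{|S|}|\alpha_i\rangle\langle\alpha_i|\otimes|\beta_i\rangle\langle\beta_i|\Big).$$ Then $\mathcal L_{\mathcal E}(\rho_S)>\mathcal R(\rho_S)$.
   Context: A partial product basis in $\mathcal H_A\otimes\mathcal H_B$ is a set of $k<\dim\mathcal H$ mutually orthogonal unit product vectors $|\alpha_i\rangle\otimes|\beta_i\rangle$. It is completable in a space $\mathcal K\supseteq\mathcal H$ of the form $\mathcal K=\mathcal K_A\otimes\mathcal K_B$ if it can be extended by further mutually orthogonal unit product vectors (product with respect to $\mathcal K_A\otimes\mathcal K_B$) to an orthonormal basis of $\mathcal K$; it is uncompletable in $\mathcal H$ if this is impossible in $\mathcal H$ itself, i.e. fewer than $\dim\mathcal H-k$ additional mutually orthogonal product vectors orthogonal to $S$ can be added. A local extension of $\mathcal H=\mathcal H_A\otimes\mathcal H_B$ is a space $\mathcal H'=(\mathcal H_A\oplus\mathcal H_A')\otimes(\mathcal H_B\oplus\mathcal H_B')$. $\mathcal R(\rho)$ is the rank of $\rho$. For a density matrix $\rho$ on $\mathcal H_A\otimes\mathcal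 H_B$, $\mathcal L_{\mathcal E}(\rho)$ (the optimal ensemble cardinality) is the least number of distinct pure product states $|\psi_i\rangle|\phi_i\rangle$ in a decomposition $\rho=\sum_i p_i|\psi_i\rangle\langle\psi_i|\otimes|\phi_i\rangle\langle\phi_i|$ with $p_i>0$ (such a decomposition exists exactly when $\rho$ is separable). *)

(* Defs.v *)
From HB Require Import structures.
From mathcomp Require Import all_boot all_order all_algebra.
From mathcomp Require Import reals.
From mathcomp Require Import complex mxtens.
Set Implicit Arguments. Unset Strict Implicit. Unset Printing Implicit Defensive.
Import Order.TTheory GRing.Theory Num.Theory.
Local Open Scope ring_scope.

Section Quantum.
Variable R : realType.
Local Notation C := R[i].

Definition adj {p q : nat} (A : 'M[C]_(p, q)) : 'M[C]_(q, p) := (map_mx Num.conj A)^T.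

Definition ip {p : nat} (u v : 'cV[C]_p) : C := (adj u *m v) 0 0.

Definition unit_vec {p : nat} (u : 'cV[C]_p) : Prop := ip u u = 1.

Definition pvec {m n : nat} (a : 'cV[C]_m) (b : 'cV[C]_n) : 'cV[C]_(m * n) := a *t b.

Definition proj {p : nat} (v : 'cV[C]_p) : 'M[C]_p := v *m adj v.

(* A partial product basis of C^m (x) C^n with k elements:
   k < m*n mutually orthogonal unit product vectors a_i (x) b_i
   (factors normalised, which is no loss of generality). *)
Definition partial_product_basis (m n k : nat)
    (a : 'I_k -> 'cV[C]_m) (b : 'I_k -> 'cV[C]_n) : Prop :=
  [/\ (k < m * n)%N,
      (forall i, unit_vec (a i) /\ unit_vec (b i)) &
      (forall i j, i != j -> ip (pvec (a i) (b i)) (pvec (a j) (b j)) = 0)].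

Definition completable (m n k : nat)
    (a : 'I_k -> 'cV[C]_m) (b : 'I_k -> 'cV[C]_n) : Prop :=
  exists (c : 'I_(m * n - k) -> 'cV[C]_m) (d : 'I_(m * n - k) -> 'cV[C]_n),
    [/\ (forall j, unit_vec (c j) /\ unit_vec (d j)),
        (forall j j', j != j' -> ip (pvec (c j) (d j)) (pvec (c j') (d j')) = 0) &
        (forall i j, ip (pvec (a i) (b i)) (pvec (c j) (d j)) = 0)].

Definition uncompletable (m n k : nat)
    (a : 'I_k -> 'cV[C]_m) (b : 'I_k -> 'cV[C]_n) : Prop :=
  ~ completable a b.

(* S is completable in some local extension
   (C^m (+) C^m') (x) (C^n (+) C^n'), C^m embedded as the first m coordinates. *)
Definition completable_in_local_extension (m n k : nat)
    (a : 'I_k -> 'cV[C]_m) (b : 'I_k -> 'cV[C]_n) : Prop :=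
  exists m' n' : nat,
    completable (fun i => col_mx (a i) (0 : 'cV[C]_m'))
                (fun i => col_mx (b i) (0 : 'cV[C]_n')).

Definition rhoS (m n k : nat)
    (a : 'I_k -> 'cV[C]_m) (b : 'I_k -> 'cV[C]_n) : 'M[C]_(m * n) :=
  ((m * n - k)%:R)^-1 *: (1%:M - \sum_(i < k) (proj (a i) *t proj (b i))).

Definition product_decomposition (m n : nat) (rho : 'M[C]_(m * n)) (N : nat) : Prop :=
  exists (p : 'I_N -> C) (x : 'I_N -> 'cV[C]_m) (y : 'I_N -> 'cV[C]_n),
    [/\ (forall i, 0 < p i),
        (forall i, unit_vec (x i) /\ unit_vec (y i)),
        (forall i j, i != j -> proj (x i) *t proj (y i) != proj (x j) *t proj (y j)) &
        rho = \sum_(i < N) p i *: (proj (x i) *t proj (y i))].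

(* rho is separable, i.e. L_E(rho) is defined *)
Definition separable (m n : nat) (rho : 'M[C]_(m * n)) : Prop :=
  exists N, product_decomposition rho N.

(* L_E(rho) > r : rho is separable and every product decomposition of rho
   uses more than r distinct pure product states. *)
Definition LE_gt (m n : nat) (rho : 'M[C]_(m * n)) (r : nat) : Prop :=
  separable rho /\ forall N, product_decomposition rho N -> (r < N)%N.

End Quantum.

(* Main.v *)
Require Import Defs.
From HB Require Import structures.
From mathcomp Require Import all_boot all_order all_algebra.
From mathcomp Require Import reals.
From mathcomp Require Import complex mxtens.
From mathcomp Require Import ring zify.
Set Implicit Arguments. Unset Strict Implicit. Unset Printing Implicit Defensive.
Import Order.TTheory GRing.Theory Num.Theory.
Local Open Scope ring_scope.

Section Aux.
Variable R : realType.
Local Notation C := R[i].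

Lemma adjE p q (A : 'M[C]_(p,q)) i j : adj A i j = (A j i)^*.
Proof. by rewrite /adj !mxE. Qed.

Lemma adj_mul p q r (A : 'M[C]_(p,q)) (B : 'M[C]_(q,r)) :
  adj (A *m B) = adj B *m adj A.
Proof. by rewrite /adj map_mxM trmx_mul. Qed.

Lemma adj_tens p q r s (A : 'M[C]_(p,q)) (B : 'M[C]_(r,s)) :
  adj (A *t B) = adj A *t adj B.
Proof. by rewrite /adj map_mxT trmx_tens. Qed.

Lemma adjK p q (A : 'M[C]_(p,q)) : adj (adj A) = A.
Proof. by apply/matrixP=> i j; rewrite !adjE conjCK. Qed.

Lemma adjD p q (A B : 'M[C]_(p,q)) : adj (A + B) = adj A + adj B.
Proof. by apply/matrixP=> i j; rewrite !mxE rmorphD. Qed.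

Lemma adjZ p q c (A : 'M[C]_(p,q)) : adj (c *: A) = c^* *: adj A.
Proof. by apply/matrixP=> i j; rewrite !mxE rmorphM. Qed.

Lemma adj0 p q : adj (0 : 'M[C]_(p,q)) = 0.
Proof. by apply/matrixP=> i j; rewrite !mxE rmorph0. Qed.

Lemma adj1 p : adj (1%:M : 'M[C]_p) = 1%:M.
Proof. by apply/matrixP=> i j; rewrite !mxE rmorphMn rmorph1 eq_sym. Qed.

Lemma adj_row p q1 q2 (A : 'M[C]_(p,q1)) (B : 'M[C]_(p,q2)) :
  adj (row_mx A B) = col_mx (adj A) (adj B).
Proof. by rewrite /adj map_row_mx tr_row_mx. Qed.

Lemma adj_col p1 p2 q (A : 'M[C]_(p1,q)) (B : 'M[C]_(p2,q)) :
  adj (col_mx A B) = row_mx (adj A) (adj B).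
Proof. by rewrite /adj map_col_mx tr_col_mx. Qed.

Lemma tensZl p q r s c (A : 'M[C]_(p,q)) (B : 'M[C]_(r,s)) :
  (c *: A) *t B = c *: (A *t B).
Proof. by apply/matrixP=> i j; rewrite !mxE mulrA. Qed.

Lemma tensZr p q r s c (A : 'M[C]_(p,q)) (B : 'M[C]_(r,s)) :
  A *t (c *: B) = c *: (A *t B).
Proof. by apply/matrixP=> i j; rewrite !mxE mulrCA. Qed.

Lemma tens11 p q : (1%:M : 'M[C]_p) *t (1%:M : 'M[C]_q) = 1%:M.
Proof.
apply/matrixP=> i j.
case: (mxtens_indexP i)=> i0 i1; case: (mxtens_indexP j)=> j0 j1.
rewrite tensmxE [RHS]mxE (can_eq (@mxtens_indexK _ _)) xpair_eqE !mxE.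
by case: (i0 == j0); case: (i1 == j1); rewrite /= ?mulr1 ?mulr0 ?mul0r.
Qed.

Lemma mx11E (A B : 'M[C]_1) : (A *m B) 0 0 = A 0 0 * B 0 0.
Proof. by rewrite !mxE big_ord1. Qed.

Lemma ord11 (x : 'I_(1 * 1)) : x = mxtens_index (0, 0).
Proof. by apply: val_inj; case: x => [[|x] Hx] //. Qed.

Lemma tens11E (A B : 'M[C]_1) : (A *t B) 0 0 = A 0 0 * B 0 0.
Proof. by rewrite [X in (_ *t _) X](ord11 0) [X in (_ *t _) _ X](ord11 0) tensmxE. Qed.

Lemma adj_tensv p q (x : 'cV[C]_p) (y : 'cV[C]_q) :
  @adj R (p * q) 1 (x *t y) = adj x *t adj y.
Proof. exact: (@adj_tens p 1 q 1 x y). Qed.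

Lemma ip_tens p q (x x' : 'cV[C]_p) (y y' : 'cV[C]_q) :
  ip (x *t y) (x' *t y') = ip x x' * ip y y'.
Proof.
rewrite /ip adj_tensv -tens11E.
exact: (congr1 (fun M : 'M[C]_(1*1) => M 0 0) (tensmx_mul _ _ _ _)).
Qed.

Lemma proj_tens p q (x : 'cV[C]_p) (y : 'cV[C]_q) :
  proj x *t proj y = proj (x *t y).
Proof. rewrite /proj adj_tensv. exact: (esym (tensmx_mul _ _ _ _)). Qed.

Lemma ipE p (u v : 'cV[C]_p) : ip u v = \sum_t (u t 0)^* * v t 0.
Proof. by rewrite /ip mxE; apply: eq_bigr => t _; rewrite adjE. Qed.

Lemma ip_conj p (u v : 'cV[C]_p) : ip v u = (ip u v)^*.
Proof.
rewrite !ipE rmorph_sum; apply: eq_bigr => t _.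
by rewrite rmorphM /= conjCK mulrC.
Qed.

Lemma ip_ge0 p (u : 'cV[C]_p) : 0 <= ip u u.
Proof. by rewrite ipE sumr_ge0 // => t _; rewrite -normCKC exprn_ge0. Qed.

Lemma ip_eq0 p (u : 'cV[C]_p) : ip u u = 0 -> u = 0.
Proof.
rewrite ipE => H; apply/matrixP=> t j; rewrite [j]ord1 mxE.
have H0 : forall s, predT s -> 0 <= (u s 0)^* * u s 0.
  by move=> s _; rewrite -normCKC exprn_ge0.
move: (psumr_eq0P H0 H (i:=t) isT) => /eqP.
by rewrite -normCKC expf_eq0 /= normr_eq0 => /eqP.
Qed.

Lemma tr11 (A : 'M[C]_1) : \tr A = A 0 0.
Proof. by rewrite /mxtrace big_ord1. Qed.

Lemma tr_proj p (u v : 'cV[C]_p) : \tr (proj u *m proj v) = ip u v * ip v u.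
Proof.
rewrite /proj mulmxA mxtrace_mulC tr11.
have -> : adj v *m (u *m adj u *m v) = (adj v *m u) *m (adj u *m v).
  by rewrite !mulmxA.
by rewrite mx11E mulrC.
Qed.

Lemma tr_proj1 p (u : 'cV[C]_p) : \tr (proj u) = ip u u.
Proof. by rewrite /proj mxtrace_mulC tr11. Qed.

End Aux.

Section Lower.
Variable R : realType.
Local Notation C := R[i].

Lemma tr_sum p (I : finType) (F : I -> 'M[C]_p) : \tr (\sum_i F i) = \sum_i \tr (F i).
Proof. exact: (big_morph _ (@mxtraceD _ _) (mxtrace0 _ _)). Qed.

Lemma sand_proj p (v u w : 'cV[C]_p) :
  (adj v *m proj u *m w) 0 0 = ip v u * ip u w.
Proof. by rewrite /proj !mulmxA -mulmxA mx11E. Qed.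

Lemma sand_sum p N (q : 'I_N -> C) (u : 'I_N -> 'cV[C]_p) (v w : 'cV[C]_p) :
  (adj v *m (\sum_i q i *: proj (u i)) *m w) 0 0 =
  \sum_i q i * (ip v (u i) * ip (u i) w).
Proof.
rewrite mulmx_sumr mulmx_suml summxE; apply: eq_bigr => i _.
by rewrite -scalemxAr -scalemxAl mxE sand_proj.
Qed.

Lemma adj_proj p (u : 'cV[C]_p) : adj (proj u) = proj u.
Proof. by rewrite /proj adj_mul adjK. Qed.

Lemma adj_sum p q (I : finType) (F : I -> 'M[C]_(p,q)) : adj (\sum_i F i) = \sum_i adj (F i).
Proof. exact: (big_morph _ (@adjD _ _ _) (adj0 _ _ _)). Qed.

Variables (m n k : nat) (a : 'I_k -> 'cV[C]_m) (b : 'I_k -> 'cV[C]_n).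
Hypothesis ppb : partial_product_basis a b.

Let s l := pvec (a l) (b l).
Let Q := \sum_l proj (s l).
Let P := 1%:M - Q.

Lemma s_orth l l' : ip (s l) (s l') = (l == l')%:R.
Proof.
case: ppb => _ hu ho; case: eqP => [<-|/eqP ne]; last by rewrite ho.
by rewrite /s /pvec ip_tens; case: (hu l) => -> ->; rewrite mulr1.
Qed.

Lemma Q_v v : Q *m v = \sum_l ip (s l) v *: s l.
Proof.
rewrite /Q mulmx_suml; apply: eq_bigr => l _.
by rewrite /proj -mulmxA [adj _ *m _]mx11_scalar mul_mx_scalar.
Qed.

Lemma Q_s l : Q *m s l = s l.
Proof.
rewrite Q_v (bigD1 l) //= s_orth eqxx scale1r big1 ?addr0 // => l' ne.
by rewrite s_orth (negbTE ne) scale0r.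
Qed.

Lemma adjQ : adj Q = Q.
Proof. by rewrite /Q adj_sum; apply: eq_bigr => l _; rewrite adj_proj. Qed.

Lemma s_Q l : adj (s l) *m Q = adj (s l).
Proof. by rewrite -adjQ -adj_mul Q_s. Qed.

Lemma QQ : Q *m Q = Q.
Proof.
rewrite {1}/Q mulmx_suml; apply: eq_bigr => l _.
by rewrite /proj -mulmxA s_Q.
Qed.

Lemma PP : P *m P = P.
Proof. by rewrite /P mulmxBl mul1mx mulmxBr mulmx1 QQ subrr subr0. Qed.

Lemma s_P l : adj (s l) *m P = 0.
Proof. by rewrite /P mulmxBr mulmx1 s_Q subrr. Qed.

Lemma trQ : \tr Q = k%:R.
Proof.
rewrite /Q tr_sum (eq_bigr (fun _ => 1)) ?sumr_const ?card_ord // => l _.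
by rewrite tr_proj1 s_orth eqxx.
Qed.

Lemma trP : \tr P = (m * n - k)%:R.
Proof.
case: ppb => hk _ _.
by rewrite /P mxtraceD linearN /= mxtrace1 trQ natrB // ltnW.
Qed.

Lemma rankP : (\rank P <= m * n - k)%N.
Proof.
pose Sr := \matrix_(l < k) adj (s l).
have SrQ : Sr *m Q = Sr by apply/row_matrixP => l; rewrite row_mul rowK s_Q.
have Sr1 : Sr *m adj Sr = 1%:M.
  apply/matrixP => l l'; rewrite !mxE -s_orth ipE; apply: eq_bigr => t _.
  by rewrite !mxE conjCK.
have k1 : (k <= \rank Q)%N.
  rewrite -{1}(mxrank1 C k) -Sr1 -SrQ.
  exact: leq_trans (mxrankM_maxl _ _) (mxrankM_maxr _ _).
have QP : Q *m P = 0 by rewrite /P mulmxBr mulmx1 QQ subrr.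
have := mxrankS (introT sub_kermxP QP); rewrite mxrank_ker.
have := rank_leq_col P.
move: k1; set x := \rank Q; set y := \rank P.
move=> h1 h2 h3; lia.
Qed.


Lemma rho_eq : rhoS a b = ((m * n - k)%:R)^-1 *: P.
Proof.
rewrite /rhoS /P /Q; congr (_ *: (_ - _)); apply: eq_bigr => l _.
by rewrite proj_tens.
Qed.

Lemma r_gt0 : (0 < m * n - k)%N.
Proof. by case: ppb => hk _ _; rewrite subn_gt0. Qed.

Lemma rank_rho : \rank (rhoS a b) = \rank P.
Proof.
rewrite rho_eq mxrank_scale_nz // invr_eq0 pnatr_eq0 -lt0n; exact: r_gt0.
Qed.

Lemma lower N : product_decomposition (rhoS a b) N ->
  (N <= \rank (rhoS a b))%N -> completable a b.
Proof.
case=> p [x [y [hp hu _ hrho]]] hN.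
have hN' : (N <= m * n - k)%N by rewrite (leq_trans hN) // rank_rho rankP.
pose r := (m * n - k)%N.
pose u i := x i *t y i.
pose q i := r%:R * p i.
have Pdec : P = \sum_i q i *: proj (u i).
  have -> : P = r%:R *: rhoS a b.
    by rewrite rho_eq scalerA mulfV ?scale1r // pnatr_eq0 -lt0n r_gt0.
  rewrite hrho scaler_sumr; apply: eq_bigr => i _.
  by rewrite scalerA proj_tens.
have uu i : ip (u i) (u i) = 1.
  by rewrite ip_tens; case: (hu i) => -> ->; rewrite mulr1.
have qpos i : 0 < q i by rewrite mulr_gt0 // ltr0n r_gt0.
have trq : \sum_i q i = r%:R.
  rewrite -trP Pdec tr_sum; apply: eq_bigr => i _.
  by rewrite mxtraceZ tr_proj1 uu mulr1.
pose g i j := ip (u i) (u j) * ip (u j) (u i).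
have gE i j : g i j = `|ip (u i) (u j)| ^+ 2.
  by rewrite /g [ip (u j) _]ip_conj -normCK.
have trPP : \sum_i \sum_j q i * q j * g i j = r%:R.
  rewrite -trP -PP Pdec mulmx_suml tr_sum; apply: eq_bigr => i _.
  rewrite mulmx_sumr tr_sum; apply: eq_bigr => j _.
  by rewrite -scalemxAl -scalemxAr !mxtraceZ tr_proj mulrA.
pose X := \sum_i q i ^+ 2.
pose O := \sum_i \sum_(j | j != i) q i * q j * g i j.
have XO : X + O = r%:R.
  rewrite -trPP -big_split; apply: eq_bigr => i _.
  by rewrite [RHS](bigD1 i) // gE uu normr1 expr1n mulr1 expr2.
have Ot_ge0 i j : 0 <= q i * q j * g i j.
  by rewrite gE mulr_ge0 ?exprn_ge0 // mulr_ge0 // ltW.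
have O_ge0 : 0 <= O by rewrite sumr_ge0 // => i _; rewrite sumr_ge0.
have sq : \sum_i (q i - 1) ^+ 2 = X - r%:R *+ 2 + N%:R.
  rewrite (eq_bigr _ (fun i _ => sqrrB1 (q i))) big_split /= sumrB sumrMnl trq.
  by rewrite sumr_const card_ord.
have sq_ge0 : 0 <= \sum_i (q i - 1) ^+ 2.
  rewrite sumr_ge0 // => i _; rewrite -real_normK ?exprn_ge0 //.
  by rewrite rpredB // ger0_real // ltW.
have rN : 0 <= r%:R - N%:R :> C by rewrite subr_ge0 ler_nat.
have H0 : O + \sum_i (q i - 1) ^+ 2 + (r%:R - N%:R) = 0.
  rewrite sq -XO; ring.
move/eqP: H0; rewrite (paddr_eq0 (addr_ge0 O_ge0 sq_ge0) rN) (paddr_eq0 O_ge0 sq_ge0).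
move=> /andP [/andP [/eqP O0 _]].
rewrite subr_eq0 eqr_nat => /eqP eN.
have uo i j : i != j -> ip (u i) (u j) = 0.
  move=> ne.
  have := psumr_eq0P (fun i _ => sumr_ge0 _ (fun j _ => Ot_ge0 i j)) O0 (i := i) isT.
  move=> Hi; have := psumr_eq0P (fun j _ => Ot_ge0 i j) Hi (i := j).
  rewrite eq_sym ne => /(_ isT) /eqP.
  rewrite gE !mulf_eq0 normr_eq0 pnatr_eq0 eqn0Ngt r_gt0 (gt_eqF (hp i)) (gt_eqF (hp j)) /= orbb => /eqP.
  done.
have su l i : ip (s l) (u i) = 0.
  have H := sand_sum q u (s l) (s l).
  rewrite -Pdec s_P mul0mx mxE in H.
  have Ht j : predT j -> 0 <= q j * (ip (s l) (u j) * ip (u j) (s l)).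
    by move=> _; rewrite [ip (u j) _]ip_conj -normCK mulr_ge0 ?exprn_ge0 // ltW.
  have := psumr_eq0P Ht (esym H) (i := i) isT.
  move/eqP; rewrite [ip (u i) _]ip_conj -normCK mulf_eq0 gt_eqF ?qpos //=.
  by rewrite expf_eq0 /= normr_eq0 => /eqP.
subst r; subst N.
exists x, y; split => //.
Qed.

End Lower.

Section Upper.
Variable R : realType.
Local Notation C := R[i].

Lemma complete_sum p D (e : p = D) (v : 'I_p -> 'cV[C]_D) :
  (forall i j, ip (v i) (v j) = (i == j)%:R) -> \sum_i proj (v i) = 1%:M.
Proof.
subst p => hv.
pose V : 'M[C]_D := \matrix_(t, i) v i t 0.
have VV : adj V *m V = 1%:M.
  apply/matrixP => i j; rewrite !mxE -hv ipE; apply: eq_bigr => t _.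
  by rewrite !mxE.
have := mulmx1C VV => <-.
apply/matrixP => x y; rewrite summxE !mxE; apply: eq_bigr => i _.
by rewrite /proj !mxE big_ord1 !mxE.
Qed.

Lemma ipZ p (x y : C) (u v : 'cV[C]_p) : ip (x *: u) (y *: v) = x^* * y * ip u v.
Proof. by rewrite /ip adjZ -scalemxAl -scalemxAr !mxE mulrA. Qed.

Lemma projZ p (x : C) (u : 'cV[C]_p) : proj (x *: u) = (x * x^*) *: proj u.
Proof. by rewrite /proj adjZ -scalemxAl -scalemxAr scalerA. Qed.

Lemma normalize p (c : 'cV[C]_p) : c != 0 ->
  exists c', [/\ unit_vec c', 0 < ip c c & proj c = ip c c *: proj c'].
Proof.
move=> nz.
have gpos : 0 < ip c c.
  by rewrite lt_def ip_ge0 andbT; apply: contra nz => /eqP /ip_eq0 ->.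
set g := ip c c in gpos *.
pose sg := sqrtC g.
have sgr : sg^* = sg by rewrite conj_Creal // ger0_real // sqrtC_ge0 ltW.
have sg2 : sg * sg = g by rewrite -expr2 sqrtCK.
have sgnz : sg != 0 by rewrite sqrtC_eq0 gt_eqF.
have gnz : g != 0 by rewrite gt_eqF.
exists (sg^-1 *: c); split => //.
- rewrite /unit_vec ipZ fmorphV /= sgr -/g -invfM sg2 mulVf //.
- rewrite projZ fmorphV /= sgr -invfM sg2 scalerA mulfV ?scale1r //.
Qed.

Lemma proj0 p : proj (0 : 'cV[C]_p) = 0.
Proof. by rewrite /proj mul0mx. Qed.

Lemma sep_add m n (A : 'M[C]_(m * n)) w (x0 : 'cV[C]_m) (y0 : 'cV[C]_n) :
  separable A -> 0 < w -> unit_vec x0 -> unit_vec y0 ->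
  separable (A + w *: (proj x0 *t proj y0)).
Proof.
case=> N [p [x [y [hp hu hd hA]]]] hw ux uy.
set M := proj x0 *t proj y0.
case: (pickP (fun i => proj (x i) *t proj (y i) == M)) => [i0 /eqP Mi0|none].
  exists N, (fun i => if i == i0 then p i + w else p i), x, y; split => //.
    by move=> i; case: eqP => _; rewrite ?addr_gt0.
  rewrite hA.
  rewrite [RHS](eq_bigr (fun i => p i *: (proj (x i) *t proj (y i)) +
                             (if i == i0 then w *: M else 0))); last first.
    move=> i _ /=; case: (eqVneq i i0) => [->|ne]; last by rewrite addr0.
    by rewrite scalerDl Mi0.
  by rewrite big_split /= -big_mkcond big_pred1_eq.
pose p' (i : 'I_N.+1) := if unlift ord_max i is Some j then p j else w.
pose x' (i : 'I_N.+1) := if unlift ord_max i is Some j then x j else x0.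
pose y' (i : 'I_N.+1) := if unlift ord_max i is Some j then y j else y0.
have wl (i : 'I_N) : widen_ord (leqnSn N) i = lift ord_max i.
  by apply: val_inj; rewrite /= /bump leqNgt ltn_ord.
exists N.+1, p', x', y'; split.
- by move=> i; rewrite /p'; case: (unlift _ _).
- by move=> i; rewrite /x' /y'; case: (unlift _ _).
- move=> i j; rewrite /x' /y'.
  case: (unliftP ord_max i) => [i'|] ->; case: (unliftP ord_max j) => [j'|] -> //.
  + by rewrite (inj_eq lift_inj); exact: hd.
  + by move=> _; rewrite none.
  + by move=> _; rewrite eq_sym none.
  + by rewrite eqxx.
- rewrite big_ord_recr /= hA; congr (_ + _).
    by apply: eq_bigr => i _; rewrite wl /p' /x' /y' liftK.
  by rewrite /p' /x' /y' unlift_none.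
Qed.

Lemma sep_gen m n J (c : 'I_J -> 'cV[C]_m) (d : 'I_J -> 'cV[C]_n) (t : C) :
  0 < t -> separable (t *: \sum_j proj (c j) *t proj (d j)).
Proof.
move=> tpos; elim: J c d => [|J IH] c d.
  exists 0%N, (fun _ => 1), (fun _ => 0), (fun _ => 0); split; try by case.
  by rewrite !big_ord0 scaler0.
rewrite big_ord_recr scalerDr /=.
have := IH (fun i => c (widen_ord (leqnSn J) i)) (fun i => d (widen_ord (leqnSn J) i)).
case: (eqVneq (c ord_max) 0) => [->|nc].
  by rewrite proj0 tens0mx scaler0 addr0.
case: (eqVneq (d ord_max) 0) => [->|nd].
  by rewrite proj0 tensmx0 scaler0 addr0.
case: (normalize nc) => c' [uc gc ->]; case: (normalize nd) => d' [ud gd ->].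
rewrite tensZl tensZr !scalerA => hs; apply: sep_add => //.
by rewrite !mulr_gt0.
Qed.

End Upper.

Section Ext.
Variable R : realType.
Local Notation C := R[i].

Lemma ipcol p q (x y : 'cV[C]_p) :
  ip (col_mx x (0 : 'cV[C]_q)) (col_mx y 0) = ip x y.
Proof. by rewrite /ip adj_col mul_row_col adj0 mul0mx addr0. Qed.

Lemma Ecol p q (x : 'cV[C]_p) :
  (row_mx 1%:M (0 : 'M[C]_(p, q))) *m col_mx x 0 = x.
Proof. by rewrite mul_row_col mul1mx mul0mx addr0. Qed.

Lemma EE p q : (row_mx 1%:M (0 : 'M[C]_(p, q))) *m adj (row_mx 1%:M 0) = 1%:M.
Proof. by rewrite adj_row adj1 adj0 mul_row_col mulmx1 mul0mx addr0. Qed.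

Lemma Eproj p D (E : 'M[C]_(p, D)) (u : 'cV[C]_D) :
  E *m proj u *m adj E = proj (E *m u).
Proof. by rewrite /proj adj_mul !mulmxA. Qed.

Lemma Etens p p' q q' (A : 'M[C]_(p, p')) (B : 'M[C]_(q, q')) x y :
  (A *t B) *m pvec x y = pvec (A *m x) (B *m y).
Proof. exact: (@tensmx_mul _ p p' q q' 1 1 A B x y). Qed.

Variables (m n k : nat) (a : 'I_k -> 'cV[C]_m) (b : 'I_k -> 'cV[C]_n).
Hypothesis ppb : partial_product_basis a b.

Lemma sepS : completable_in_local_extension a b -> separable (rhoS a b).
Proof.
case=> m' [n' [c [d [hu ho hso]]]].
pose D := ((m + m') * (n + n'))%N.
pose M' := (D - k)%N.
have kD : (k <= D)%N.
  case: ppb => hk _ _; apply: ltnW; apply: (leq_trans hk).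
  by rewrite leq_mul // leq_addr.
have e : (k + M')%N = D by rewrite subnKC.
pose a' l := col_mx (a l) (0 : 'cV[C]_m').
pose b' l := col_mx (b l) (0 : 'cV[C]_n').
pose v (i : 'I_(k + M')) : 'cV[C]_D :=
  match split i with inl l => pvec (a' l) (b' l) | inr j => pvec (c j) (d j) end.
have orth i j : ip (v i) (v j) = (i == j)%:R.
  rewrite /v; case: (split_ordP i) => l ->; case: (split_ordP j) => l' ->.
  - by rewrite eq_lshift /pvec ip_tens !ipcol -ip_tens; exact: s_orth.
  - by rewrite eq_lrshift hso.
  - by rewrite eq_rlshift ip_conj hso rmorph0.
  - rewrite eq_rshift; case: (eqVneq l l') => [<-|ne]; last exact: ho.
    by rewrite /pvec ip_tens; case: (hu l) => -> ->; rewrite mulr1.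
have S1 := complete_sum e orth.
have sl l : split (lshift M' l) = inl _ l := unsplitK (inl l).
have sr j : split (rshift k j) = inr _ j := unsplitK (inr j).
pose EA := row_mx 1%:M (0 : 'M[C]_(m, m')).
pose EB := row_mx 1%:M (0 : 'M[C]_(n, n')).
pose E := EA *t EB.
have EE1 : E *m adj E = 1%:M by rewrite adj_tens tensmx_mul !EE tens11.
have key : 1%:M = \sum_l proj (pvec (a l) (b l)) +
                  \sum_j proj (EA *m c j) *t proj (EB *m d j).
  have E1 : E *m (\sum_i proj (v i)) *m adj E = 1%:M by rewrite S1 mulmx1 EE1.
  rewrite -E1 mulmx_sumr mulmx_suml big_split_ord /=.
  congr (_ + _); apply: eq_bigr => l _; rewrite Eproj /v ?sl ?sr Etens.
    by rewrite !Ecol.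
  by rewrite proj_tens.
rewrite rho_eq // key addrAC subrr add0r; apply: sep_gen.
by rewrite invr_gt0 ltr0n (r_gt0 ppb).
Qed.

End Ext.

Theorem theorem2 (R : realType) (m n k : nat)
    (a : 'I_k -> 'cV[R[i]]_m) (b : 'I_k -> 'cV[R[i]]_n) :
  partial_product_basis a b ->
  uncompletable a b ->
  completable_in_local_extension a b ->
  LE_gt (rhoS a b) (\rank (rhoS a b)).
Proof.
move=> ppb unc ext; split; first exact: sepS.
move=> N hN; rewrite ltnNge; apply/negP => le; apply: unc.
exact: (lower ppb hN le).
Qed.
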